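(* Let $\lambda\in(0,1)$ and let $G=([n],E)$ be any undirected graph (information graph). Then \[ \frac{\alpha(G) - (\alpha(G)-1)\lambda}{\alpha(G)} \;\ge\; \gamma_\lambda(G) \;\ge\; \frac{\theta(G) - (\theta(G)-1)\lambda}{\theta(G)+\lambda}, \] where $\alpha(G)$ is the independence number of $G$ and $\theta(G)$ is its clique cover number (the least number of cliques partitioning the vertex set).
   Context: For a finite base set $S$ and $f:2^S\to\mathbb{R}_{\ge0}$, write $f(A\mid B)=f(A\cup B)-f(B)$. $f$ is normalized if $f(\emptyset)=0$, monotone if $f(\{e\}\mid A)\ge0$ for all $e,A$, submodular if $f(\{e\}\mid A)\ge f(\{e\}\mid B)$ for $A\subseteq B\subseteq S$, $e\in S\setminus B$. Such $f$ has total curvature $\lambda\in(0,1)$ if $f(\{e\}\mid A)\ge(1-\lambda)f(\{e\})$ for all $e\in S$ and $A\subseteq S\setminus\{e\}$; $\mathcal{F}_\lambda$ is the set of normalized, monotone, submodular functions with total curvature $\lambda$. There are $n$ agents $[n]$ with decision sets $X_i\subseteq S$ forming a partition of $S$; action profiles $x\in X=X_1\times\cdots\times X_n$ are valued by $f(x)=f(\{x_1,\dots,x_n\})$, and $x_M=\{x_i:i\in M\}$. Let $x^{\mathrm{opt}}\in\arg\max_{x\in X}f(x)$. Given an undirected graph $G=([n],E)$, let $\mathcal{N}_i=\{j<i : (j,i)\in E\}$. The generalized greedy algorithm produces $x^{\mathrm{sol}}$ with $x^{\mathrm{sol}}_i\in\arg\max_{x_i\in X_i} f(x_i\mid x^{\mathrm{sol}}_{\mathcal{N}_i})$,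 taking $x^{\mathrm{sol}}$ to be the worst among all possible greedy outcomes. Define $\gamma(f,X,G)=f(x^{\mathrm{sol}})/f(x^{\mathrm{opt}})$ and $\gamma_\lambda(G)=\inf_{f\in\mathcal{F}_\lambda,X}\gamma(f,X,G)$. *)

(* Defs.v *)
From HB Require Import structures.
From mathcomp Require Import all_boot all_order all_algebra.
From mathcomp Require Import classical_sets reals.
Set Implicit Arguments. Unset Strict Implicit. Unset Printing Implicit Defensive.
Import Order.TTheory GRing.Theory Num.Theory.
Local Open Scope ring_scope.

Section Defs.
Variable R : realType.

Section SetFun.
Variable S : finType.
Implicit Types (f : {set S} -> R).

Definition marg f (A B : {set S}) : R := f (A :|: B) - f B.

Definition nonneg_sf f := forall A, 0 <= f A.
Definition normalized f := f (finset.set0) = 0.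
Definition monotone_sf f := forall (e : S) (A : {set S}), 0 <= marg f (finset.set1 e) A.
Definition submodular f :=
  forall (A B : {set S}) (e : S), A \subset B -> e \notin B ->
    marg f (finset.set1 e) B <= marg f (finset.set1 e) A.
Definition total_curvature (lam : R) f :=
  forall (e : S) (A : {set S}), e \notin A -> (1 - lam) * f (finset.set1 e) <= marg f (finset.set1 e) A.

Definition in_F (lam : R) f :=
  [/\ nonneg_sf f, normalized f, monotone_sf f, submodular f & total_curvature lam f].
End SetFun.

Section Agents.
Variables (n : nat) (S : finType).

Definition decision_partition (X : 'I_n -> {set S}) :=
  [/\ forall i, X i != finset.set0,
      forall i j, i != j -> [disjoint X i & X j]
    & forall s : S, exists i, s \in X i].

Definition profile (X : 'I_n -> {set S}) (x : 'I_n -> S) := forall i, x i \in X i.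

Definition xM (x : 'I_n -> S) (M : {set 'I_n}) : {set S} := x @: M.

Definition fval (f : {set S} -> R) (x : 'I_n -> S) : R := f (xM x (finset.setTfor 'I_n)).

Definition nbrs (e : rel 'I_n) (i : 'I_n) : {set 'I_n} := finset (fun j : 'I_n => (j < i)%N && e j i).

(* x is a possible outcome of the generalized greedy algorithm *)
Definition greedy (f : {set S} -> R) (X : 'I_n -> {set S}) (e : rel 'I_n) (x : 'I_n -> S) :=
  profile X x /\
  forall i (y : S), y \in X i ->
    marg f (finset.set1 y) (xM x (nbrs e i)) <= marg f (finset.set1 (x i)) (xM x (nbrs e i)).

(* f(x^opt) = max over action profiles (f >= 0, so starting the max at 0 is harmless) *)
Definition fopt (f : {set S} -> R) (X : 'I_n -> {set S}) : R :=
  \big[Num.max/0]_(x : {ffun 'I_n -> S} | [forall i, x i \in X i]) fval f x.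

(* gamma(f,X,G): ratio for the worst greedy outcome (inf over a finite set = min) *)
Definition gamma (f : {set S} -> R) (X : 'I_n -> {set S}) (e : rel 'I_n) : R :=
  inf (fun r : R => exists x, greedy f X e x /\ r = fval f x / fopt f X).
End Agents.

Definition gamma_lambda (lam : R) (n : nat) (e : rel 'I_n) : R :=
  inf [set r : R | exists (S : finType) (f : {set S} -> R) (X : 'I_n -> {set S}),
        [/\ in_F lam f, decision_partition X, 0 < fopt f X & r = gamma f X e]].

Definition is_clique n (e : rel 'I_n) (A : {set 'I_n}) :=
  [forall i in A, forall j in A, (i != j) ==> e i j].
Definition is_indep n (e : rel 'I_n) (A : {set 'I_n}) :=
  [forall i in A, forall j in A, ~~ e i j].

Definition alpha n (e : rel 'I_n) : nat :=
  \max_(A : {set 'I_n} | is_indep e A) #|A|.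

(* clique cover number: least number of cliques partitioning the vertex set
   (finset's [partition P D] requires blocks nonempty, disjoint, covering D;
    the start value n is attained by the partition into singletons) *)
Definition theta n (e : rel 'I_n) : nat :=
  \big[minn/n]_(P : {set {set 'I_n}} | finset.partition P (finset.setTfor 'I_n) &&
                                         [forall A in P, is_clique e A]) #|P|.
End Defs.

(* Main.v *)
Require Import Defs.
From HB Require Import structures.
From mathcomp Require Import all_boot all_order all_algebra.
From mathcomp Require Import classical_sets reals.
From mathcomp Require Import finset.
From mathcomp Require Import ring lra.
Import Order.TTheory GRing.Theory Num.Theory.
Local Open Scope ring_scope.
Set Implicit Arguments. Unset Strict Implicit. Unset Printing Implicit Defensive.

Section Helpers.
Variable R : realType.
Variable S : finType.
Implicit Types (f : {set S} -> R).

Lemma telescope n f (T : {set S}) (x : 'I_n -> S) (A : {set 'I_n}) :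
  f (T :|: x @: A) - f T =
  \sum_(i in A) marg f [set x i] (T :|: x @: [set j in A | (j < i)%N]).
Proof.
suff H : forall k, (k <= n)%N -> f (T :|: x @: [set j in A | (j < k)%N]) - f T =
  \sum_(i in A | (i < k)%N) marg f [set x i] (T :|: x @: [set j in A | (j < i)%N]).
  have := H n (leqnn n).
  have -> : [set j in A | (j < n)%N] = A by apply/setP => j; rewrite inE ltn_ord andbT.
  move=> ->; apply: eq_bigl => i; by rewrite ltn_ord andbT.
elim=> [_|k IH Hk].
  have -> : [set j in A | (j < 0)%N] = finset.set0 by apply/setP => j; rewrite !inE ltn0 andbF.
  rewrite imset0 finset.setU0 subrr big_pred0 // => i; by rewrite ltn0 andbF.
have Hk' : (k < n)%N by [].
set i0 := Ordinal Hk'.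
have IH' := IH (ltnW Hk).
case: (boolP (i0 \in A)) => Hi0.
  have Eset : [set j in A | (j < k.+1)%N] = i0 |: [set j in A | (j < k)%N].
    apply/setP => j; rewrite !inE ltnS leq_eqVlt.
    case: (boolP (j == i0)) => [/eqP -> | Hj] /=; first by rewrite eqxx Hi0.
    have -> : (val j == k) = false by apply/negbTE; apply: contra Hj => /eqP Hj; apply/eqP/val_inj.
    by [].
  rewrite (bigD1 i0) /=; last by rewrite Hi0 ltnSn.
  have -> : \sum_(i < n | (i \in A) && (i < k.+1)%N && (i != i0))
      marg f [set x i] (T :|: x @: [set j in A | (j < i)%N]) =
      \sum_(i in A | (i < k)%N) marg f [set x i] (T :|: x @: [set j in A | (j < i)%N]).
    apply: eq_bigl => j.
    case: (boolP (j == i0)) => [/eqP -> | Hj] /=; first by rewrite ltnn !andbF.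
    rewrite ltnS leq_eqVlt.
    have -> : (val j == k) = false by apply/negbTE; apply: contra Hj => /eqP Hj; apply/eqP/val_inj.
    by rewrite andbT.
  have -> : [set x x0 | x0 : 'I_n & (x0 \in A) && (x0 < k.+1)%N] = x i0 |: [set x x0 | x0 in [set j in A | (j < k)%N]].
    by rewrite -imsetU1 -Eset.
  rewrite -IH' /marg finset.setUCA; rewrite addrA subrK; by [].
have Eset : [set j in A | (j < k.+1)%N] = [set j in A | (j < k)%N].
  apply/setP => j; rewrite !inE ltnS leq_eqVlt.
  case: (boolP (j == i0)) => [/eqP -> | Hj] /=; first by rewrite (negbTE Hi0).
  have -> : (val j == k) = false by apply/negbTE; apply: contra Hj => /eqP Hj; apply/eqP/val_inj.
  by [].
rewrite Eset IH'; apply: eq_bigl => j; rewrite [in RHS]ltnS [in RHS]leq_eqVlt.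
case: (boolP (j == i0)) => [/eqP -> | Hj] /=; first by rewrite (negbTE Hi0).
have -> : (val j == k) = false by apply/negbTE; apply: contra Hj => /eqP Hj; apply/eqP/val_inj.
by [].
Qed.

Lemma marg_in f e (A : {set S}) : e \in A -> marg f [set e] A = 0.
Proof. by move=> H; rewrite /marg (setUidPr _) ?subrr // sub1set. Qed.

Lemma marg_anti lam f e (A B : {set S}) : in_F lam f -> A \subset B ->
  marg f [set e] B <= marg f [set e] A.
Proof.
case=> _ _ Hmon Hsub _ AB.
case: (boolP (e \in B)) => eB; last exact: Hsub.
by rewrite marg_in //; apply: Hmon.
Qed.

Lemma marg_le1 lam f e (A : {set S}) : in_F lam f -> marg f [set e] A <= f [set e].
Proof.
move=> HF; have := marg_anti e HF (sub0set A).
case: HF => _ Hn _ _ _.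
by rewrite /marg finset.setU0 Hn subr0.
Qed.

Lemma marg_ge0 lam f e (A : {set S}) : in_F lam f -> 0 <= marg f [set e] A.
Proof. by case=> _ _ Hmon _ _; apply: Hmon. Qed.

Lemma uniqX n (X : 'I_n -> {set S}) (x o : 'I_n -> S) i j :
  decision_partition X -> profile X x -> profile X o -> o i = x j -> i = j.
Proof.
case=> _ Hd _ Hx Ho E; apply/eqP; apply: contraT => ne.
have := disjointFr (Hd i j ne) (Ho i); by rewrite E Hx.
Qed.

Lemma arith1 (lam fx g U L : R) : (1 - lam) * fx <= L -> U <= g ->
  0 <= (1 - lam) * (fx - g) -> U - L <= lam * g.
Proof. move=> *; lra. Qed.

Lemma stepA n (e : rel 'I_n) lam f (X : 'I_n -> {set S}) (x o : 'I_n -> S) :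
  0 < lam < 1 -> in_F lam f -> decision_partition X -> greedy f X e x -> profile X o ->
  fval f o <= fval f x +
    lam * \sum_(i in [set: 'I_n]) marg f [set x i] (xM x (nbrs e i)).
Proof.
move=> /andP [l0 l1] HF HX [Hx Hg] Ho.
have tA := telescope f (xM o [set: 'I_n]) x [set: 'I_n].
have tB := telescope f (xM x [set: 'I_n]) o [set: 'I_n].
rewrite /xM setUC in tA.
suff : \sum_(i in [set: 'I_n]) marg f [set o i] (x @: [set: 'I_n] :|: o @: [set j in [set: 'I_n] | (j < i)%N])
  - \sum_(i in [set: 'I_n]) marg f [set x i] (o @: [set: 'I_n] :|: x @: [set j in [set: 'I_n] | (j < i)%N])
  <= lam * \sum_(i in [set: 'I_n]) marg f [set x i] (xM x (nbrs e i)).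
  rewrite /fval /xM in tB *; rewrite -tA -tB. lra.
rewrite -sumrB mulr_sumr; apply: ler_sum => i _.
have g0 := marg_ge0 (x i) (xM x (nbrs e i)) HF.
have g1 := marg_le1 (x i) (xM x (nbrs e i)) HF.
case: (eqVneq (x i) (o i)) => Hxo.
  rewrite (@marg_in _ (o i)); last by rewrite in_setU -Hxo imset_f ?in_setT.
  have := marg_ge0 (x i) (o @: [set: 'I_n] :|: x @: [set j in [set: 'I_n] | (j < i)%N]) HF.
  have : 0 <= lam * marg f [set x i] (xM x (nbrs e i)) by apply: mulr_ge0 => //; apply: ltW.
  lra.
have HL : (1 - lam) * f [set x i] <= marg f [set x i] (o @: [set: 'I_n] :|: x @: [set j in [set: 'I_n] | (j < i)%N]).
  case: HF => _ _ _ _ Hc; apply: Hc.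
  rewrite in_setU negb_or; apply/andP; split; apply/imsetP => [[j Hj E]].
    have Eji := uniqX HX Hx Ho (esym E); by move: Hxo; rewrite E Eji eqxx.
  have Eji := uniqX HX Hx Hx (esym E); move: Hj; by rewrite !inE Eji ltnn.
have HU : marg f [set o i] (x @: [set: 'I_n] :|: o @: [set j in [set: 'I_n] | (j < i)%N])
   <= marg f [set x i] (xM x (nbrs e i)).
  apply: le_trans (Hg i (o i) (Ho i)).
  apply: marg_anti HF _; apply: subsetU; apply/orP; left; apply: imsetS; apply: subsetT.
have : 0 <= (1 - lam) * (f [set x i] - marg f [set x i] (xM x (nbrs e i))).
  apply: mulr_ge0; lra.
move=> H; exact: (arith1 HL HU H).
Qed.

Lemma stepB n (e : rel 'I_n) lam f (x : 'I_n -> S) (P : {set {set 'I_n}}) :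
  in_F lam f -> partition P [set: 'I_n] -> (forall B, B \in P -> is_clique e B) ->
  \sum_(i in [set: 'I_n]) marg f [set x i] (xM x (nbrs e i)) <= \sum_(B in P) f (x @: B).
Proof.
move=> HF /and3P [/eqP cov triv _] Hcl.
rewrite -cov big_trivIset //; apply: ler_sum => B HB.
have := telescope f set0 x B.
have Hn : f set0 = 0 by case: HF.
rewrite set0U Hn subr0 => ->.
apply: ler_sum => i iB.
apply: marg_anti HF _; rewrite set0U /xM; apply: imsetS; apply/fintype.subsetP => j; rewrite !inE => /andP [jB ji].
rewrite ji /=.
have := Hcl B HB; move/forallP => /(_ j) /implyP /(_ jB) /forallP /(_ i) /implyP /(_ iB) /implyP; apply.
by rewrite neq_ltn ji.
Qed.

Lemma arith2 (a b s c : R) : b - a = s -> c <= s -> a + c <= b.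
Proof. move=> *; lra. Qed.

Lemma stepC n lam f (X : 'I_n -> {set S}) (x : 'I_n -> S) (B : {set 'I_n}) :
  0 < lam < 1 -> in_F lam f -> decision_partition X -> profile X x ->
  f (x @: B) + (1 - lam) * (\sum_(i in [set: 'I_n]) f [set x i] - \sum_(i in B) f [set x i])
    <= fval f x.
Proof.
move=> /andP [l0 l1] HF HX Hx.
have t := telescope f (x @: B) x (~: B).
rewrite -imsetU setUCr in t.
have -> : \sum_(i in [set: 'I_n]) f [set x i] - \sum_(i in B) f [set x i] = \sum_(i in ~: B) f [set x i].
  rewrite (@big_setID _ _ _ _ [set: 'I_n] B) setTI setTD. by rewrite /= addrC addrK.
apply: (arith2 t).
rewrite mulr_sumr; apply: ler_sum => i iB.
case: HF => _ _ _ _ Hc; apply: Hc.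
rewrite in_setU negb_or; apply/andP; split; apply/imsetP => [[j Hj E]].
  have Eji := uniqX HX Hx Hx (esym E); move: iB; by rewrite in_setC -Eji Hj.
have Eji := uniqX HX Hx Hx (esym E); move: Hj; by rewrite !inE Eji ltnn andbF.
Qed.

Lemma arith3 (t lam fO fX G Sa F : R) : 1 <= t -> 0 < lam < 1 ->
  fO <= fX + lam * G -> G <= Sa -> Sa + (1 - lam) * (t * F - F) <= t * fX -> Sa <= F ->
  (t - (t - 1) * lam) * fO <= (t + lam) * fX.
Proof.
move=> t1 /andP [l0 l1] h1 h2 h3 h4.
have c0 : 0 <= t - (t - 1) * lam by nra.
have p1 : 0 <= (1 - lam) * (t - 1) * (F - Sa) by apply: mulr_ge0; [apply: mulr_ge0|]; lra.
have p2 : 0 <= (t - (t - 1) * lam) * (fX + lam * G - fO) by apply: mulr_ge0; lra.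
have p3 : 0 <= lam * (t - (t - 1) * lam) * (Sa - G) by apply: mulr_ge0; [apply: mulr_ge0|]; lra.
have p4 : 0 <= lam * (t * fX - (t - (t - 1) * lam) * Sa) by apply: mulr_ge0; nra.
nra.
Qed.

Lemma core n (e : rel 'I_n) lam f (X : 'I_n -> {set S}) (x o : 'I_n -> S) P :
  0 < lam < 1 -> in_F lam f -> decision_partition X -> greedy f X e x -> profile X o ->
  partition P [set: 'I_n] -> (forall B, B \in P -> is_clique e B) -> (0 < #|P|)%N ->
  (#|P|%:R - (#|P|%:R - 1) * lam) * fval f o <= (#|P|%:R + lam) * fval f x.
Proof.
move=> Hl HF HX Hg Ho Hp Hcl Pgt0.
have hA := stepA Hl HF HX Hg Ho.
have hB := stepB x HF Hp Hcl.
have Fs : \sum_(i in [set: 'I_n]) f [set x i] = \sum_(B in P) \sum_(i in B) f [set x i].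
  by case/and3P: Hp => /eqP <- triv _; rewrite big_trivIset.
have hC : \sum_(B in P) (f (x @: B) + (1 - lam) * (\sum_(i in [set: 'I_n]) f [set x i] - \sum_(i in B) f [set x i]))
   <= \sum_(B in P) fval f x.
  by apply: ler_sum => B _; exact: (stepC B Hl HF HX Hg.1).
rewrite big_split /= -mulr_sumr sumrB !sumr_const -Fs in hC. 
have hD : \sum_(B in P) f (x @: B) <= \sum_(i in [set: 'I_n]) f [set x i].
  rewrite Fs; apply: ler_sum => B _.
  have := telescope f set0 x B.
  have Hn : f set0 = 0 by case: HF.
  rewrite set0U Hn subr0 => ->.
  by apply: ler_sum => i _; apply: marg_le1 HF.
apply: (arith3 _ Hl hA hB _ hD).
- by rewrite ler1n.
- by rewrite !mulr_natl.
Qed.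

Lemma greedy_exists n (e : rel 'I_n) f (X : 'I_n -> {set S}) :
  decision_partition X -> exists x, greedy f X e x.
Proof.
case=> Hne _ _.
have [x0 Hx0] : exists x0 : 'I_n -> S, profile X x0.
  have H0 : forall i, exists s : S, s \in X i.
    by move=> i; case/set0Pn: (Hne i) => s Hs; exists s.
  have [g Hg] := @fin_all_exists _ (fun _ => S) (fun i s => s \in X i) H0.
  by exists g.
suff H : forall k, (k <= n)%N -> exists x, profile X x /\
   forall i : 'I_n, (i < k)%N -> forall y, y \in X i ->
     marg f [set y] (xM x (nbrs e i)) <= marg f [set x i] (xM x (nbrs e i)).
  have [x [Hx Hg]] := H n (leqnn n); exists x; split => // i y Hy; exact: Hg i (ltn_ord i) y Hy.
elim=> [_|k IH Hk]; first by exists x0; split => // i; rewrite ltn0.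
have [x [Hx Hg]] := IH (ltnW Hk).
pose i0 : 'I_n := Ordinal Hk.
pose F := fun y => marg f [set y] (xM x (nbrs e i0)).
have [y Hy Hmax] : exists2 y, y \in X i0 & forall z, z \in X i0 -> F z <= F y.
  case/set0Pn: (Hne i0) => s Hs.
  case: (@arg_maxP _ _ S s (fun z => z \in X i0) F Hs) => y Hy Hm.
  by exists y.
pose x' := fun j => if j == i0 then y else x j.
have Ex : forall i : 'I_n, (i <= k)%N -> xM x' (nbrs e i) = xM x (nbrs e i).
  move=> i ik; apply: eq_in_imset => j; rewrite inE => /andP [ji _].
  rewrite /x'; case: eqP => // Ej; exfalso; move: ji; by rewrite Ej /= ltnNge ik.
exists x'; split.
  by move=> j; rewrite /x'; case: eqP => [->|_].
move=> i ilt y' Hy'; rewrite ltnS in ilt; rewrite Ex //.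
case: (eqVneq i i0) => [Ei | Ni].
  rewrite Ei /x' eqxx; apply: Hmax; by rewrite -Ei.
rewrite /x' (negbTE Ni); apply: Hg => //.
rewrite ltn_neqAle ilt andbT; apply: contra Ni => /eqP Ei.
by rewrite -val_eqE /= Ei.
Qed.

Lemma arith4 (c d F v : R) : 0 < c -> 0 < d -> 0 < F -> F <= d / c * v -> c / d <= v / F.
Proof.
move=> c0 d0 F0 H.
rewrite ler_pdivlMr // mulrAC ler_pdivrMr //.
rewrite mulrAC ler_pdivlMr // in H; lra.
Qed.

Lemma lower_gamma n (e : rel 'I_n) lam f (X : 'I_n -> {set S}) P :
  0 < lam < 1 -> in_F lam f -> decision_partition X -> 0 < fopt f X ->
  partition P [set: 'I_n] -> (forall B, B \in P -> is_clique e B) -> (0 < #|P|)%N ->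
  (#|P|%:R - (#|P|%:R - 1) * lam) / (#|P|%:R + lam) <= gamma f X e.
Proof.
move=> Hl HF HX Hopt Hp Hcl Pgt0.
have t1 : 1 <= (#|P|%:R : R) by rewrite ler1n.
have /andP [l0 l1] := Hl.
apply: lb_le_inf.
  have [x Hx] := greedy_exists e f HX.
  by exists (fval f x / fopt f X); exists x.
move=> r [x [Hx ->]].
apply: arith4 => //.
- nra.
- lra.
rewrite /fopt; apply: bigmax_le.
  apply: mulr_ge0; last by case: HF => H _ _ _ _; apply: H.
  apply: divr_ge0; nra.
move=> o /forallP Ho.
rewrite mulrAC ler_pdivlMr; last by nra.
rewrite mulrC; apply: (core Hl HF HX Hx) => //.
Qed.
End Helpers.

Lemma theta_attained n (e : rel 'I_n) :
  exists P : {set {set 'I_n}},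
    [/\ partition P [set: 'I_n], (forall B, B \in P -> is_clique e B) & #|P| = theta e].
Proof.
rewrite /theta.
apply: (big_ind (fun v => exists P : {set {set 'I_n}},
    [/\ partition P [set: 'I_n], (forall B, B \in P -> is_clique e B) & #|P| = v])).
- exists [set [set i] | i in [set: 'I_n]]; split.
  + apply/and3P; split.
    * apply/eqP; rewrite cover_imset; apply/setP => j; rewrite inE; apply/bigcupP; exists j; by rewrite ?inE.
    * apply/trivIsetP => A B /imsetP [i _ ->] /imsetP [j _ ->] ne.
      rewrite disjoints1 inE; apply: contra ne => /eqP ->; done.
    * apply/imsetP => [[i _ E]]; have := set11 i; by rewrite -E inE.
  + move=> B /imsetP [i _ ->]; apply/forallP => a; apply/implyP; rewrite inE => /eqP ->.
    apply/forallP => b; apply/implyP; rewrite inE => /eqP ->; by rewrite eqxx.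
  + by rewrite card_imset ?cardsT ?card_ord //; exact: set1_inj.
- move=> v w [P [Pp Pc Pv]] [Q [Qp Qc Qw]]; rewrite /minn; case: ifP => _; [by exists P | by exists Q].
- move=> P /andP [Pp /forallP Pc]; exists P; split => // B HB; exact: (implyP (Pc B) HB).
Qed.

Lemma alpha_attained n (e : rel 'I_n) : exists I, is_indep e I /\ #|I| = alpha e.
Proof.
rewrite /alpha.
apply: (big_ind (fun v => exists I, is_indep e I /\ #|I| = v)).
- exists set0; split; last by rewrite cards0.
  by apply/forallP => i; rewrite inE.
- move=> v w [P [Pp Pv]] [Q [Qp Qw]]; rewrite /maxn; case: ifP => _; [by exists Q | by exists P].
- move=> P Pp; by exists P.
Qed.

Lemma alpha_pos n (e : rel 'I_n) : irreflexive e -> (0 < n)%N -> (0 < alpha e)%N.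
Proof.
move=> Hirr n0; pose i0 : 'I_n := Ordinal n0.
have H : is_indep e [set i0].
  apply/forallP => a; apply/implyP; rewrite inE => /eqP ->.
  apply/forallP => b; apply/implyP; rewrite inE => /eqP ->; by rewrite Hirr.
have := @leq_bigmax_cond _ (is_indep e) (fun A => #|A|) [set i0] H.
by rewrite cards1.
Qed.

Lemma cardP_pos n (P : {set {set 'I_n}}) : partition P [set: 'I_n] -> (0 < n)%N -> (0 < #|P|)%N.
Proof.
move=> /and3P [/eqP cov _ _] n0.
have : Ordinal n0 \in cover P by rewrite cov inE.
case/bigcupP => B HB _; apply/card_gt0P; by exists B.
Qed.

Section Inst.
Variable R : realType.
Variables (n : nat) (I : {set 'I_n}) (lam : R).

Definition Sh : {set 'I_n * bool} := [set (i, false) | i in I].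
Definition Un : {set 'I_n * bool} := [set (i, true) | i in I].
Definition fI (A : {set 'I_n * bool}) : R :=
  (1 - lam) * #|A :&: Sh|%:R + lam * (#|A :&: Sh| != 0%N)%:R + #|A :&: Un|%:R.

Lemma inSh (s : 'I_n * bool) : (s \in Sh) = (s.1 \in I) && ~~ s.2.
Proof.
case: s => j b /=; apply/imsetP/andP => [[i iI [-> ->]] // | [jI]].
by case: b => // _; exists j.
Qed.

Lemma inUn (s : 'I_n * bool) : (s \in Un) = (s.1 \in I) && s.2.
Proof.
case: s => j b /=; apply/imsetP/andP => [[i iI [-> ->]] // | [jI]].
by case: b => // _; exists j.
Qed.

Lemma cardIU1 (T : finType) (s : T) (A C : {set T}) : s \notin A ->
  #|(s |: A) :&: C| = ((s \in C) + #|A :&: C|)%N.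
Proof.
move=> sA; case sC: (s \in C).
  have -> : (s |: A) :&: C = s |: (A :&: C).
    apply/setP => z; rewrite !inE; case: (eqVneq z s) => [->|] //=; by rewrite sC.
  by rewrite cardsU1 inE (negbTE sA).
have -> : (s |: A) :&: C = A :&: C.
  apply/setP => z; rewrite !inE; case: (eqVneq z s) => [->|] //=; by rewrite sC (negbTE sA).
by [].
Qed.

Lemma arith5 (l k u : R) (b c : bool) (kz : bool) :
  (1 - l) * (b%:R + k) + l * (if b then true else kz)%:R + (c%:R + u)
  - ((1 - l) * k + l * kz%:R + u)
  = b%:R * ((1 - l) + l * (~~ kz)%:R) + c%:R.
Proof. case: b; case: c; case: kz => /=; ring. Qed.

Lemma margF s (A : {set 'I_n * bool}) : s \notin A -> marg fI [set s] A =
   (s \in Sh)%:R * ((1 - lam) + lam * (#|A :&: Sh| == 0%N)%:R) + (s \in Un)%:R.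
Proof.
move=> sA; rewrite /marg /fI !cardIU1 // !natrD.
have -> : ((s \in Sh) + #|A :&: Sh| != 0)%N = (if s \in Sh then true else #|A :&: Sh| != 0%N).
  by case: (s \in Sh).
have := arith5 lam #|A :&: Sh|%:R #|A :&: Un|%:R (s \in Sh) (s \in Un) (#|A :&: Sh| != 0%N).
by rewrite negbK.
Qed.

Lemma fI0 : fI set0 = 0.
Proof. by rewrite /fI !set0I cards0 /= !mulr0 !addr0. Qed.

Lemma fI_set1 s : fI [set s] = (s \in Sh)%:R + (s \in Un)%:R.
Proof.
have s0 : s \notin (set0 : {set 'I_n * bool}) by rewrite inE.
have := @margF s set0 s0.
rewrite /marg setU0 fI0 subr0 set0I cards0 eqxx => ->.
by rewrite mulr1 subrK mulr1.
Qed.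

Lemma arith6 (a b z1 z2 l : R) : 0 <= a -> 0 <= l -> z1 <= z2 ->
  a * ((1 - l) + l * z1) + b <= a * ((1 - l) + l * z2) + b.
Proof.
move=> Ha Hl Hz; have H : 0 <= z2 - z1 by lra.
have := mulr_ge0 (mulr_ge0 Ha Hl) H; nra.
Qed.

Lemma arith7 (a b z l : R) : 0 <= a -> 0 <= b -> 0 <= z -> 0 < l < 1 ->
  (1 - l) * (a + b) <= a * ((1 - l) + l * z) + b.
Proof.
move=> Ha Hb Hz /andP [l0 l1].
have := mulr_ge0 (mulr_ge0 Ha (ltW l0)) Hz; have := mulr_ge0 (ltW l0) Hb; nra.
Qed.

Lemma fI_inF : 0 < lam < 1 -> in_F lam fI.
Proof.
move=> Hl; have /andP [l0 l1] := Hl; split.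
- move=> A; rewrite /fI; apply: addr_ge0; [apply: addr_ge0|]; rewrite ?ler0n //;
  apply: mulr_ge0; rewrite ?ler0n //; lra.
- exact: fI0.
- move=> s A; case: (boolP (s \in A)) => sA; first by rewrite marg_in.
  rewrite margF //; apply: addr_ge0; rewrite ?ler0n //; apply: mulr_ge0; rewrite ?ler0n //.
  apply: addr_ge0; [lra | apply: mulr_ge0; rewrite ?ler0n //; lra].
- move=> A B s AB sB.
  have sA : s \notin A by apply: contra sB; apply: (fintype.subsetP AB).
  rewrite !margF //; apply: arith6; rewrite ?ler0n //; first lra.
  rewrite ler_nat.
  have : (#|B :&: Sh| == 0%N) ==> (#|A :&: Sh| == 0%N).
    apply/implyP => /eqP HB; rewrite -leqn0 -HB; apply: subset_leq_card; exact: setSI.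
  by case: (#|B :&: Sh| == 0%N); case: (#|A :&: Sh| == 0%N).
- move=> s A sA; rewrite margF // fI_set1; apply: arith7; by rewrite ?ler0n.
Qed.

Definition X0 (i : 'I_n) : {set 'I_n * bool} := [set s | s.1 == i].
Definition xf (i : 'I_n) : 'I_n * bool := (i, false).

Lemma X0_part : decision_partition X0.
Proof.
split.
- move=> i; apply/set0Pn; exists (i, false); by rewrite inE.
- move=> i j ne; apply/pred0P => s /=; rewrite !inE.
  case: eqP => //= ->; exact: negbTE ne.
- move=> s; exists s.1; by rewrite inE.
Qed.

Lemma xf_greedy (e : rel 'I_n) : 0 < lam < 1 -> is_indep e I -> greedy fI X0 e xf.
Proof.
move=> Hl Hind; have /andP [l0 l1] := Hl; have HF := fI_inF Hl.
split; first by move=> i; rewrite inE.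
move=> i y Hy.
have Hle := marg_le1 y (xM xf (nbrs e i)) HF; rewrite fI_set1 in Hle.
move: Hy Hle; case: y => j b; rewrite inE /= => /eqP -> Hle.
rewrite !inSh !inUn /= in Hle.
case: (boolP (i \in I)) => iI; last first.
  rewrite (negbTE iI) /= add0r in Hle.
  apply: le_trans Hle _; rewrite /= ?addr0; apply: marg_ge0 HF.
have Hn : xf i \notin xM xf (nbrs e i).
  apply/imsetP => [[j' Hj' E]]; have Ej : j' = i by case: E.
  by move: Hj'; rewrite inE Ej ltnn.
rewrite (margF Hn) /xf inSh inUn /= iI /=.
have -> : xM xf (nbrs e i) :&: Sh = set0.
  apply/setP => z; rewrite !inE; apply/andP => [[/imsetP [j' Hj' ->]]].
  rewrite inSh /= andbT => j'I.
  move: Hj'; rewrite inE => /andP [_ Ej].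
  move/forallP: Hind => /(_ j') /implyP /(_ j'I) /forallP /(_ i) /implyP /(_ iI).
  by rewrite Ej.
rewrite cards0 eqxx mulr1 subrK mul1r addr0.
apply: le_trans Hle _; rewrite iI; case: b => /=; rewrite ?addr0 ?add0r //.
Qed.

Lemma fval_xf : fval fI xf = (1 - lam) * #|I|%:R + lam * (#|I| != 0%N)%:R.
Proof.
rewrite /fval /xM /fI.
have -> : [set xf x | x in [set: 'I_n]] :&: Sh = Sh.
  apply/setIidPr; apply/fintype.subsetP => z /imsetP [i _ ->]; exact: imset_f.
have -> : [set xf x | x in [set: 'I_n]] :&: Un = set0.
  apply/setP => z; rewrite !inE; apply/andP => [[/imsetP [i _ ->]]]; by rewrite inUn /= andbF.
have -> : #|Sh| = #|I| by rewrite card_imset // => a b [].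
by rewrite cards0 addr0.
Qed.

Lemma fopt_ge : (#|I|%:R : R) <= fopt fI X0.
Proof.
pose o : {ffun 'I_n -> 'I_n * bool} := [ffun i => (i, true)].
have Ho : [forall i, o i \in X0 i] by apply/forallP => i; rewrite ffunE inE.
apply: le_trans (le_bigmax_cond _ _ Ho).
rewrite /fval /xM /fI.
have -> : [set o x | x in [set: 'I_n]] = [set (i, true) | i in [set: 'I_n]].
  by apply: eq_imset => i; rewrite ffunE.
have -> : [set (i, true) | i in [set: 'I_n]] :&: Un = Un.
  apply/setIidPr; apply/fintype.subsetP => z /imsetP [i _ ->]; exact: imset_f.
have -> : [set (i, true) | i in [set: 'I_n]] :&: Sh = set0.
  apply/setP => z; rewrite !inE; apply/andP => [[/imsetP [i _ ->]]]; by rewrite inSh /= andbF.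
have -> : #|Un| = #|I| by rewrite card_imset // => a b [].
by rewrite cards0 /= mulr0 mulr0 !add0r.
Qed.
End Inst.

Lemma gamma_ge0 (R : realType) (n : nat) (e : rel 'I_n) (S : finType) lam (f : {set S} -> R) X :
  in_F lam f -> decision_partition X -> 0 < fopt f X -> 0 <= gamma f X e.
Proof.
move=> HF HX Hopt; apply: lb_le_inf.
  have [x Hx] := greedy_exists e f HX.
  by exists (fval f x / fopt f X); exists x.
move=> r [x [Hx ->]]; apply: divr_ge0; last exact: ltW.
by case: HF => H _ _ _ _; apply: H.
Qed.

Theorem lemma4 (R : realType) (lam : R) (n : nat) (e : rel 'I_n) :
  0 < lam < 1 -> (0 < n)%N -> symmetric e -> irreflexive e ->
  let a : R := (alpha e)%:R in
  let t : R := (theta e)%:R in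
  gamma_lambda lam e <= (a - (a - 1) * lam) / a /\
  (t - (t - 1) * lam) / (t + lam) <= gamma_lambda lam e.
Proof.
move=> Hl n0 _ Hirr a t.
have /andP [l0 l1] := Hl.
have [I [HI Ia]] := alpha_attained e.
have apos := alpha_pos Hirr n0.
have Ipos : (0 < #|I|)%N by rewrite Ia.
have HF := fI_inF I Hl.
have HX := @X0_part n.
have Hopt := fopt_ge I lam.
have Ipos' : (0 : R) < #|I|%:R by rewrite ltr0n.
have Hopt0 : 0 < fopt (fI I lam) (@X0 n) by apply: lt_le_trans Hopt.
have Hg := xf_greedy (I := I) Hl HI.
have Hlb : has_lbound (fun r : R => exists (S : finType) (f : {set S} -> R) (X : 'I_n -> {set S}),
        [/\ in_F lam f, decision_partition X, 0 < fopt f X & r = gamma f X e]).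
  exists 0 => r /= [S' [f [X [HF' HX' Hopt' ->]]]].
  exact: gamma_ge0 HF' HX' Hopt'.
have Hmem : (fun r : R => exists (S : finType) (f : {set S} -> R) (X : 'I_n -> {set S}),
        [/\ in_F lam f, decision_partition X, 0 < fopt f X & r = gamma f X e])
        (gamma (fI I lam) (@X0 n) e).
  by exists ('I_n * bool)%type, (fI I lam), (@X0 n); split.
split.
  apply: le_trans (ge_inf Hlb Hmem) _.
  have Hlb2 : has_lbound (fun r : R => exists x, greedy (fI I lam) (@X0 n) e x /\ r = fval (fI I lam) x / fopt (fI I lam) (@X0 n)).
    exists 0 => r [x [_ ->]]; apply: divr_ge0; last exact: ltW.
    by case: HF => H _ _ _ _; apply: H.
  have Hmem2 : (fun r : R => exists x, greedy (fI I lam) (@X0 n) e x /\ r = fval (fI I lam) x / fopt (fI I lam) (@X0 n))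
     (fval (fI I lam) (@xf n) / fopt (fI I lam) (@X0 n)) by exists (@xf n).
  apply: le_trans (ge_inf Hlb2 Hmem2) _.
  rewrite fval_xf -lt0n Ipos /= mulr1.
  have -> : (a - (a - 1) * lam) / a = ((1 - lam) * #|I|%:R + lam) / #|I|%:R.
    by rewrite /a -Ia; congr (_ / _); ring.
  apply: ler_wpM2l.
    apply: addr_ge0; [apply: mulr_ge0 => //; lra | exact: ltW].
  by rewrite lef_pV2 ?posrE.
apply: lb_le_inf; first by exists (gamma (fI I lam) (@X0 n) e).
move=> r /= [S' [f [X [HF' HX' Hopt' ->]]]].
have [P [Pp Pc Pt]] := theta_attained e.
rewrite /t -Pt; apply: lower_gamma => //.
exact: cardP_pos Pp n0.
Qed.
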